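(* Let $\mathcal{R}$ be an orthogonal TRS, $S$ a reduction strongly $p$-converging from $s$ to $t$, and $U$ a set of redex occurrences in $s$. Then $U/S$ is a set of redex occurrences in $t$.
   Context: Orthogonal = left-linear and non-overlapping. Partial terms over $\Sigma_\bot=\Sigma\uplus\{\bot\}$ ordered by $\le_\bot$ (replacing subterms by $\bot$) form a complete semilattice; $\liminf_{\iota\to\alpha}a_\iota=\bigvee_{\beta<\alpha}\bigwedge_{\beta\le\iota<\alpha}a_\iota$. A reduction $S=(t_\iota\to_{\pi_\iota}t_{\iota+1})_{\iota<\alpha}$ with contexts $c_\iota$ ($t_\iota$ with position $\pi_\iota$ replaced by $\bot$) strongly $p$-converges to $t$ if $\liminf_{\iota\to\lambda}c_\iota=t_\lambda$ for every limit $\lambda<\alpha$ and $t$ is the last term (closed) or $t=\liminf_{\iota\to\alpha}c_\iota$ (open). Descendants $U/S$ of a set $U$ of non-$\bot$ positions of $t_0$: for length 0, $U$; for a single step at $\pi$ with rule $l\to r$, each $u\in U$ yields $\{u\}$ if $\pi\not\le u$, $\emptyset$ if $u=\pi\cdot\pi'$ with $\pi'$ a function-symbol position of $l$, and $\{\pi\cdot w'\cdot x\mid r|_{w'}=l|_w\}$ if $u=\pi\cdot w\cdot x$ with $l|_w$ a variable; for successor length $\beta+1$, the descendants by the last step of the descendants by $S|_\beta$; for limit length $\alpha$, $u\in U/S$ iff $u$ is a non-$\bot$ position of $t_\alpha$ and there is $\beta<\alpha$ with $u\in U/(S|_\iota)$ for all $\beta\le\iota<\alpha$. *)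

(* Defs.v *)
From mathcomp Require Import all_boot.
Set Implicit Arguments. Unset Strict Implicit. Unset Printing Implicit Defensive.

(** * Partial (possibly infinite) terms over Sigma_bot, as labelled trees on positions *)

Inductive sym (F V : Type) : Type :=
  | SFun of F
  | SVar of V
  | SBot.
Arguments SFun {F V}. Arguments SVar {F V}. Arguments SBot {F V}.

Definition pterm (F V : Type) := seq nat -> option (sym F V).

Section Terms.
Variables (F V : Type) (ar : F -> nat).
Local Notation term := (pterm F V).

Definition wf (t : term) : Prop :=
  t [::] <> None /\
  forall p i, t (rcons p i) <> None <-> exists f, t p = Some (SFun f) /\ i < ar f.

Definition finite_term (t : term) : Prop :=
  exists n, forall p, n <= size p -> t p = None.

Definition no_bot (t : term) : Prop := forall p, t p <> Some SBot.

Definition fin_total (t : term) : Prop := wf t /\ finite_term t /\ no_bot t.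

Definition bot_term : term := fun q => if q is [::] then Some SBot else None.

Definition subterm (t : term) (p : seq nat) : term := fun q => t (p ++ q).

Definition replace (t : term) (p : seq nat) (s : term) : term :=
  fun q => if prefix p q then s (drop (size p) q) else t q.

Fixpoint subst_aux (sigma : V -> term) (t : term) (acc : seq nat) (p : seq nat)
  : option (sym F V) :=
  match t acc with
  | Some (SVar x) => sigma x p
  | _ => match p with
         | [::] => t acc
         | i :: p' => subst_aux sigma t (rcons acc i) p'
         end
  end.
Definition subst (sigma : V -> term) (t : term) : term := subst_aux sigma t [::].

Definition nonbot_pos (t : term) (p : seq nat) : Prop :=
  exists a, t p = Some a /\ a <> SBot.

Definition ple (s t : term) : Prop :=
  forall p a, s p = Some a -> a <> SBot -> t p = Some a.

Definition is_glb (A : term -> Prop) (m : term) : Prop :=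
  wf m /\ (forall a, A a -> ple m a) /\
  (forall m', wf m' -> (forall a, A a -> ple m' a) -> ple m' m).

Definition is_lub (A : term -> Prop) (m : term) : Prop :=
  wf m /\ (forall a, A a -> ple a m) /\
  (forall m', wf m' -> (forall a, A a -> ple a m') -> ple m m').

Record rule := Rule { lhs : term; rhs : term }.

Definition rule_wf (rho : rule) : Prop :=
  fin_total (lhs rho) /\ fin_total (rhs rho) /\
  (exists f, lhs rho [::] = Some (SFun f)) /\
  (forall p x, rhs rho p = Some (SVar x) -> exists q, lhs rho q = Some (SVar x)).

Definition trs := rule -> Prop.

Definition trs_wf (R : trs) : Prop := forall rho, R rho -> rule_wf rho.

Definition left_linear (R : trs) : Prop :=
  forall rho, R rho -> forall p q x,
    lhs rho p = Some (SVar x) -> lhs rho q = Some (SVar x) -> p = q.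

Definition non_overlapping (R : trs) : Prop :=
  forall rho1 rho2, R rho1 -> R rho2 -> forall p f,
    lhs rho1 p = Some (SFun f) ->
    (exists sigma1 sigma2 : V -> term,
        (forall x, fin_total (sigma1 x)) /\ (forall x, fin_total (sigma2 x)) /\
        subst sigma1 (subterm (lhs rho1) p) = subst sigma2 (lhs rho2)) ->
    p = [::] /\ rho1 = rho2.

Definition orthogonal (R : trs) : Prop := left_linear R /\ non_overlapping R.

Definition step (R : trs) (s : term) (pi : seq nat) (rho : rule) (s' : term) : Prop :=
  R rho /\ exists sigma : V -> term, (forall x, wf (sigma x)) /\
    subterm s pi = subst sigma (lhs rho) /\
    s' = replace s pi (subst sigma (rhs rho)).

Definition redex_occ (R : trs) (s : term) (pi : seq nat) : Prop :=
  exists rho (sigma : V -> term), R rho /\ (forall x, wf (sigma x)) /\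
    subterm s pi = subst sigma (lhs rho).

Definition step_desc (rho : rule) (pi : seq nat) (u u' : seq nat) : Prop :=
  (~~ prefix pi u /\ u' = u) \/
  (exists w x w' v, u = pi ++ w ++ x /\ lhs rho w = Some (SVar v) /\
     subterm (rhs rho) w' = subterm (lhs rho) w /\ u' = pi ++ w' ++ x).

End Terms.

(** * Ordinals, represented by well-ordered index types *)
Section Ordinals.
Variables (O : Type) (lt : O -> O -> Prop).

Definition is_wellorder : Prop :=
  (forall x, ~ lt x x) /\ (forall x y z, lt x y -> lt y z -> lt x z) /\
  (forall x y, lt x y \/ x = y \/ lt y x) /\ well_founded lt.

Definition ole (x y : O) : Prop := lt x y \/ x = y.
Definition is_zero (b : O) : Prop := forall o, ~ lt o b.
Definition is_succ (g b : O) : Prop := lt g b /\ forall o, ~ (lt g o /\ lt o b).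
Definition is_limit (b : O) : Prop :=
  (exists o, lt o b) /\ forall o, lt o b -> exists o', lt o o' /\ lt o' b.
End Ordinals.

Section Reductions.
Variables (F V : Type) (ar : F -> nat) (O : Type) (lt : O -> O -> Prop).
Local Notation term := (pterm F V).

Definition is_liminf (c : O -> term) (lam : O) (x : term) : Prop :=
  exists g : O -> term,
    (forall b, lt b lam ->
       is_glb ar (fun a => exists i, ole lt b i /\ lt i lam /\ a = c i) (g b)) /\
    is_lub ar (fun a => exists b, lt b lam /\ a = g b) x.

(** The indices are the elements of a well-ordered type O that are
    <= alpha (O contains alpha itself, so that ts alpha denotes the final
    term).  [ctx i] is the context c_i. *)
Definition ctx (ts : O -> term) (pi : O -> seq nat) (i : O) : term :=
  replace (ts i) (pi i) (@bot_term F V).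

Definition is_reduction (R : trs F V) (alpha : O) (ts : O -> term)
    (pi : O -> seq nat) (rho : O -> rule F V) : Prop :=
  (forall i, ole lt i alpha -> wf ar (ts i)) /\
  (forall i j, lt i alpha -> is_succ lt i j -> step ar R (ts i) (pi i) (rho i) (ts j)).

(** strong p-convergence from s to t: at every limit lam < alpha,
    liminf c = ts lam; the result t is the last term ts alpha if alpha is not
    a limit (closed), or ts alpha = liminf_{i -> alpha} c_i if alpha is a
    limit (open). *)
Definition strongly_p_converges (R : trs F V) (alpha : O) (ts : O -> term)
    (pi : O -> seq nat) (rho : O -> rule F V) (s t : term) : Prop :=
  is_reduction R alpha ts pi rho /\
  (forall z, is_zero lt z -> ts z = s) /\
  (forall lam, ole lt lam alpha -> is_limit lt lam -> is_liminf (ctx ts pi) lam (ts lam)) /\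
  ts alpha = t.

(** descendants U/(S|_b) for b <= alpha, by transfinite recursion
    (as an inductive predicate: desc b u  <->  u \in U/(S|_b)). *)
Inductive desc (alpha : O) (ts : O -> term) (pi : O -> seq nat)
    (rho : O -> rule F V) (U : seq nat -> Prop) : O -> seq nat -> Prop :=
  | desc_zero b u : is_zero lt b -> U u -> desc alpha ts pi rho U b u
  | desc_succ g b u0 u : lt g alpha -> is_succ lt g b ->
      desc alpha ts pi rho U g u0 -> step_desc (rho g) (pi g) u0 u ->
      desc alpha ts pi rho U b u
  | desc_limit b u b0 : ole lt b alpha -> is_limit lt b -> nonbot_pos (ts b) u ->
      lt b0 b ->
      (forall i, ole lt b0 i -> lt i b -> desc alpha ts pi rho U i u) ->
      desc alpha ts pi rho U b u.

End Reductions.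

(* Main.v *)
Require Import Defs.
From mathcomp Require Import all_boot zify.
From Stdlib Require Import Classical ClassicalEpsilon FunctionalExtensionality.
Set Implicit Arguments. Unset Strict Implicit. Unset Printing Implicit Defensive.

Section Basics.
Variables (F V : Type) (ar : F -> nat).
Local Notation term := (pterm F V).

Lemma prefSF (l : term) q0 q1 : wf ar l -> l (q0 ++ q1) <> None -> q1 <> [::] ->
  exists f, l q0 = Some (SFun f).
Proof.
move=> [_ Hw]; elim/last_ind: q1 => [|q1 i IH] // Hn _.
move: Hn; rewrite -rcons_cat => /Hw [f [Hf Hi]].
case: (lastP q1) IH Hf => [|q1' j] IH Hf.
  by exists f; rewrite cats0 in Hf.
apply: IH; [by rewrite Hf|by move=> /(congr1 size); rewrite size_rcons].
Qed.

Lemma L4 (sigma : V -> term) (t : term) acc q r :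
  (forall q0 q1, q = q0 ++ q1 -> q1 <> [::] -> forall x, t (acc ++ q0) <> Some (SVar x)) ->
  subst_aux sigma t acc (q ++ r) = subst_aux sigma t (acc ++ q) r.
Proof.
elim: q acc => [|i q IH] acc H; first by rewrite cats0.
rewrite cat_cons /=.
have H0 : forall x, t acc <> Some (SVar x).
  by move=> x; have := H [::] (i :: q) erefl ltac:(done) x; rewrite cats0.
have Hrec : subst_aux sigma t (rcons acc i) (q ++ r) = subst_aux sigma t (acc ++ i :: q) r.
  rewrite IH -?cat_rcons //; move=> q0 q1 Eq Hq1 x; rewrite cat_rcons.
  by apply: (H (i :: q0) q1 _ Hq1); rewrite Eq.
destruct (t acc) as [[f|x|]|] eqn:E => //.
by case: (H0 x).
Qed.

Lemma subst_at (sigma : V -> term) (l : term) q r : wf ar l -> l q <> None ->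
  subst sigma l (q ++ r) = subst_aux sigma l q r.
Proof.
move=> Hw Hq; rewrite /subst L4 //.
move=> q0 q1 E Hq1 x; rewrite /=; have Hq' : l (q0 ++ q1) <> None by rewrite -E.
have [f Hf] := prefSF Hw Hq' Hq1.
by rewrite Hf.
Qed.

Lemma subst_nonvar (sigma : V -> term) (l : term) q : wf ar l -> l q <> None ->
  (forall x, l q <> Some (SVar x)) -> subst sigma l q = l q.
Proof.
move=> Hw Hq Hv; rewrite -[q]cats0 subst_at // cats0 /=.
by case E: (l q) => [[f|x|]|] //; case: (Hv x).
Qed.

Lemma subst_var (sigma : V -> term) (l : term) q r x : wf ar l ->
  l q = Some (SVar x) -> subst sigma l (q ++ r) = sigma x r.
Proof.
move=> Hw Hq; rewrite subst_at ?Hq //.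
by case: r => [|i r] /=; rewrite Hq.
Qed.

Lemma wf_subterm (t : term) p : wf ar t -> t p <> None -> wf ar (subterm t p).
Proof.
move=> [H0 H] Hp; split; first by rewrite /subterm cats0.
by move=> q i; rewrite /subterm -rcons_cat; apply: H.
Qed.

Lemma wf_bot : wf ar (@bot_term F V).
Proof. by split => // p i; split => [|[f []]]; [case: p|case: p]. Qed.


Definition pat (t : term) u (l : term) :=
  forall p f, l p = Some (SFun f) -> t (u ++ p) = Some (SFun f).

Lemma PLf (t : term) u (l : term) sigma : wf ar l ->
  subterm t u = subst sigma l -> pat t u l.
Proof.
move=> Hw E p f Hp; have -> : t (u ++ p) = subterm t u p by [].
by rewrite E subst_nonvar ?Hp.
Qed.

Lemma NoneL (t : term) u (l : term) p : wf ar t -> wf ar l -> no_bot l -> pat t u l ->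
  l [::] <> None ->
  (forall q r x, p = q ++ r -> l q <> Some (SVar x)) -> l p = None -> t (u ++ p) = None.
Proof.
move=> Ht Hl Hb Hp Hr; elim/last_ind: p => [|p i IH] Hv Hn; first by [].
have Hv' : forall q r x, p = q ++ r -> l q <> Some (SVar x).
  move=> q r x E; apply: (Hv q (rcons r i)); by rewrite E rcons_cat.
case E: (t (u ++ rcons p i)) => [a|] //; exfalso.
have Hne : t (rcons (u ++ p) i) <> None by rewrite rcons_cat E.
have [f [Hf Hi]] := (Ht.2 _ _).1 Hne.
case El: (l p) => [[g|x|]|].
- move: (Hp _ _ El); rewrite Hf => -[Efg].
  have : l (rcons p i) <> None by apply: (proj2 (Hl.2 p i)); exists g; split; [exact: El | by rewrite -Efg].
  by rewrite Hn.
- by apply: (Hv p [:: i] x); rewrite ?cats1.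
- by apply: (Hb p).
- by move: (IH Hv' El); rewrite Hf.
Qed.

Lemma PLb (t : term) u (l : term) f0 : wf ar t -> wf ar l -> no_bot l ->
  (forall p q x, l p = Some (SVar x) -> l q = Some (SVar x) -> p = q) ->
  l [::] = Some (SFun f0) -> pat t u l ->
  exists sigma : V -> term, (forall x, wf ar (sigma x)) /\ subterm t u = subst sigma l.
Proof.
move=> Ht Hl Hb Hlin Hr Hp.
pose sigma := fun x => match excluded_middle_informative (exists q, l q = Some (SVar x)) with
  | left _ => subterm t (u ++ epsilon (inhabits [::]) (fun q => l q = Some (SVar x)))
  | right _ => @bot_term F V end.
have Hsig : forall q x, l q = Some (SVar x) -> sigma x = subterm t (u ++ q).
  move=> q x Hq; rewrite /sigma; case: excluded_middle_informative => [H|[]]; last by exists q.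
  by rewrite (Hlin _ _ _ (epsilon_spec _ _ H) Hq).
have Hdef : forall q x, l q = Some (SVar x) -> t (u ++ q) <> None.
  move=> q x Hq; case: (lastP q) Hq => [|q0 i] Hq; first by rewrite Hr in Hq.
  have : l (rcons q0 i) <> None by rewrite Hq.
  move=> /(Hl.2 q0 i) [f [Hf Hi]]; rewrite -rcons_cat; apply/(Ht.2).
  by exists f; split => //; apply: Hp.
exists sigma; split.
  move=> x; rewrite /sigma; case: excluded_middle_informative => [H|_]; last exact: wf_bot.
  apply: wf_subterm => //; apply: Hdef; exact: (epsilon_spec _ _ H).
apply: functional_extensionality => p.
case: (classic (exists q r x, p = q ++ r /\ l q = Some (SVar x))) => [[q [r [x [-> Hq]]]]|Hn].
  by rewrite (subst_var sigma r Hl Hq) (Hsig _ _ Hq) /subterm catA.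
have Hv : forall q r x, p = q ++ r -> l q <> Some (SVar x).
  by move=> q r x E Hq; apply: Hn; exists q, r, x.
have Hlp : subst sigma l p = l p.
  rewrite /subst -[p]cats0 L4 ?cats0 /=.
    by case E: (l p) => [[g|x|]|] //; case: (Hv p [::] x); rewrite ?cats0.
  by move=> q0 q1 E _ x; apply: (Hv q0 q1 x).
rewrite Hlp /subterm; case El: (l p) => [[g|x|]|].
- exact: Hp.
- by case: (Hv p [::] x); rewrite ?cats0.
- by case: (Hb p).
- by apply: (NoneL Ht Hl Hb Hp _ Hv El); rewrite Hr.
Qed.


Lemma subst_novar (sigma : V -> term) (l : term) p :
  (forall q r x, p = q ++ r -> l q <> Some (SVar x)) -> subst sigma l p = l p.
Proof.
move=> Hv; rewrite /subst -[p]cats0 L4 ?cats0 /=.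
  by case E: (l p) => [[g|x|]|] //; case: (Hv p [::] x); rewrite ?cats0.
by move=> q0 q1 E _ x; apply: (Hv q0 q1 x).
Qed.

Lemma fin_subterm (T : term) q : fin_total ar T -> T q <> None -> fin_total ar (subterm T q).
Proof.
move=> [Hw [[n Hn] Hb]] Hq; split; first exact: wf_subterm.
split; last by move=> p; apply: Hb.
exists n => p Hp; apply: Hn; rewrite size_cat; apply: leq_trans Hp _; exact: leq_addl.
Qed.

Lemma F6gen (A W T : term) (sA : V -> term) : wf ar A -> no_bot A ->
  (forall p q x, A p = Some (SVar x) -> A q = Some (SVar x) -> p = q) ->
  W = subst sA A ->
  (forall p f, A p = Some (SFun f) -> T p = Some (SFun f)) ->
  (forall p, W p = None -> T p = None) ->
  (forall q x, A q = Some (SVar x) -> T q <> None) ->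
  fin_total ar T ->
  exists tA : V -> term, (forall x, fin_total ar (tA x)) /\ subst tA A = T.
Proof.
move=> Hw Hb Hlin EW Hi Hii Hq HT.
pose tA := fun x => match excluded_middle_informative (exists q, A q = Some (SVar x)) with
  | left _ => subterm T (epsilon (inhabits [::]) (fun q => A q = Some (SVar x)))
  | right _ => T end.
have Hsig : forall q x, A q = Some (SVar x) -> tA x = subterm T q.
  move=> q x Hq'; rewrite /tA; case: excluded_middle_informative => [H|[]]; last by exists q.
  by rewrite (Hlin _ _ _ (epsilon_spec _ _ H) Hq').
exists tA; split.
  move=> x; rewrite /tA; case: excluded_middle_informative => [H|_] //.
  by apply: fin_subterm => //; apply: (Hq _ x); exact: (epsilon_spec _ _ H).
apply: functional_extensionality => p.
case: (classic (exists q r x, p = q ++ r /\ A q = Some (SVar x))) => [[q [r [x [-> Hq']]]]|Hn].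
  by rewrite (subst_var tA r Hw Hq') (Hsig _ _ Hq').
have Hv : forall q r x, p = q ++ r -> A q <> Some (SVar x).
  by move=> q r x E Hq'; apply: Hn; exists q, r, x.
rewrite subst_novar //; case El: (A p) => [[g|x|]|].
- by rewrite (Hi _ _ El).
- by case: (Hv p [::] x); rewrite ?cats0.
- by case: (Hb p).
- by symmetry; apply: Hii; rewrite EW subst_novar.
Qed.

Lemma UL (A B W : term) (sA sB : V -> term) :
  fin_total ar A -> fin_total ar B ->
  (forall p q x, A p = Some (SVar x) -> A q = Some (SVar x) -> p = q) ->
  (forall p q x, B p = Some (SVar x) -> B q = Some (SVar x) -> p = q) ->
  (exists f, A [::] = Some (SFun f)) -> (exists f, B [::] = Some (SFun f)) ->
  (forall x, wf ar (sA x)) -> (forall x, wf ar (sB x)) ->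
  wf ar W -> W = subst sA A -> W = subst sB B ->
  exists tA tB : V -> term, (forall x, fin_total ar (tA x)) /\
     (forall x, fin_total ar (tB x)) /\ subst tA A = subst tB B.
Proof.
move=> [HwA [[nA HnA] HbA]] [HwB [[nB HnB] HbB]] HlA HlB [fa Ha] [fb Hb] HsA HsB HW EA EB.
case: (classic (inhabited V)) => [[v0]|HV]; last first.
  have nv : forall (l : term) q x, l q <> Some (SVar x) by move=> l q x; case: HV; constructor.
  have EAB : A = B.
    apply: functional_extensionality => p.
    have := congr1 (fun g => g p) (etrans (esym EA) EB) => /=.
    by rewrite !subst_novar.
  exists (fun x => ltac:(case: HV; constructor; exact x)), (fun x => ltac:(case: HV; constructor; exact x)).
  by split; [move=> x; case: HV; constructor|split; [move=> x; case: HV; constructor|rewrite EAB]].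
pose K := fun p => (exists f, A p = Some (SFun f)) \/ (exists f, B p = Some (SFun f)).
pose T := fun p : seq nat => if excluded_middle_informative (K p) then W p else
   if excluded_middle_informative (exists q i, p = rcons q i /\ K q /\ W p <> None)
   then Some (@SVar F V v0) else None.
have WA : forall p f, A p = Some (SFun f) -> W p = Some (SFun f).
  by move=> p f Hp; rewrite EA subst_nonvar // Hp.
have WB : forall p f, B p = Some (SFun f) -> W p = Some (SFun f).
  by move=> p f Hp; rewrite EB subst_nonvar // Hp.
have TK : forall p, K p -> T p = W p.
  by move=> p Hp; rewrite /T; case: excluded_middle_informative.
have Kpre : forall p i, K (rcons p i) -> K p.
  move=> p i [[f Hf]|[f Hf]].
    have : A (rcons p i) <> None by rewrite Hf.
    by move=> /(HwA.2 p i) [g [Hg _]]; left; exists g.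
  have : B (rcons p i) <> None by rewrite Hf.
  by move=> /(HwB.2 p i) [g [Hg _]]; right; exists g.
have TN : forall p, W p = None -> T p = None.
  move=> p Hp; rewrite /T; destruct (excluded_middle_informative (K p)); first exact Hp.
  destruct excluded_middle_informative as [[q [i [E [Kq H]]]]|Hno]; last by [].
  by case: (H Hp).
have TF : forall p, ~ K p -> (exists q i, p = rcons q i /\ K q /\ W p <> None) ->
    T p = Some (SVar v0).
  move=> p H1 H2; rewrite /T; destruct (excluded_middle_informative (K p)) as [k|k]; first by case: H1.
  by destruct excluded_middle_informative as [h|h]; last by case: h.
have TO : forall p, ~ K p -> ~ (exists q i, p = rcons q i /\ K q /\ W p <> None) -> T p = None.
  move=> p H1 H2; rewrite /T; destruct (excluded_middle_informative (K p)) as [k|k]; first by case: H1.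
  by destruct excluded_middle_informative as [h|h]; first by case: H2.
have Tcase : forall p, (K p /\ T p = W p) \/
    (~ K p /\ (exists q i, p = rcons q i /\ K q /\ W p <> None) /\ T p = Some (SVar v0)) \/
    (~ K p /\ ~ (exists q i, p = rcons q i /\ K q /\ W p <> None) /\ T p = None).
  move=> p; case: (classic (K p)) => Kp; first by left; split => //; apply: TK.
  case: (classic (exists q i, p = rcons q i /\ K q /\ W p <> None)) => H.
    by right; left; split => //; split => //; apply: TF.
  by right; right; split => //; split => //; apply: TO.
have wfT : wf ar T.
  split; first by rewrite TK; [case: HW|left; exists fa].
  move=> p i; split.
  - case: (Tcase (rcons p i)) => [[HK ->]|[[HK [[q [j [E [Kq Wn]]]] _]]|[_ [_ ->]]]] //.
      move=> /(HW.2 p i) [f [Hf Hi]]; exists f; split => //.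
      by rewrite TK ?Hf //; apply: Kpre HK.
    move=> _; move: E => /rcons_inj [Eq Ej]; subst q j.
    have [f [Hf Hi]] := (HW.2 p i).1 Wn; exists f; split => //.
    by rewrite TK.
  - move=> [f [Hf Hi]].
    have Kp : K p.
      by case: (Tcase p) => [[? _]|[[_ [_ E]]|[_ [_ E]]]] //; rewrite Hf in E.
    have Wn : W (rcons p i) <> None by apply/(HW.2 p i); exists f; rewrite -(TK p Kp).
    case: (Tcase (rcons p i)) => [[_ ->]|[[_ [_ ->]]|[_ [H _]]]] //.
    by case: H; exists p, i.
have finT : fin_total ar T.
  split => //; split.
    exists (maxn nA nB).+1 => p Hp.
    have KN : forall q, K q -> size q < maxn nA nB.
      move=> q [[f Hf]|[f Hf]].
        case: (ltnP (size q) nA) => Hs; first by apply: leq_trans Hs (leq_maxl _ _).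
        by move: (HnA q Hs); rewrite Hf.
      case: (ltnP (size q) nB) => Hs; first by apply: leq_trans Hs (leq_maxr _ _).
      by move: (HnB q Hs); rewrite Hf.
    case: (Tcase p) => [[/KN H _]|[[_ [[q [i [E [/KN Kq _]]]] _]]|[_ [_ ->]]]] //; exfalso.
      by move: (ltn_trans Hp H); rewrite ltnn.
    by move: Hp; rewrite E size_rcons ltnS leqNgt Kq.
  move=> p; case: (Tcase p) => [[[[f Hf]|[f Hf]] ->]|[[_ [_ ->]]|[_ [_ ->]]]] //.
  - by rewrite (WA _ _ Hf).
  - by rewrite (WB _ _ Hf).
have Tvar : forall (l : term) (sl : V -> term), wf ar l -> (exists f, l [::] = Some (SFun f)) -> (forall x, wf ar (sl x)) ->
    W = subst sl l -> (forall p f, l p = Some (SFun f) -> K p) ->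
    forall q x, l q = Some (SVar x) -> T q <> None.
  move=> l sl Hwl Hl0 Hsl El Hlk q x Hq.
  have Wq : W q <> None by rewrite El -[q]cats0 (subst_var sl [::] Hwl Hq); case: (Hsl x).
  case: (classic (K q)) => [Kq|Kq]; first by rewrite TK.
  case: (lastP q) Hq Wq Kq => [|q0 i] Hq Wq Kq; first by case: Hl0 => f; rewrite Hq.
  have : l (rcons q0 i) <> None by rewrite Hq.
  move=> /(Hwl.2 q0 i) [g [Hg _]].
  rewrite TF //; exists q0, i; split => //; split => //.
  exact: Hlk Hg.
have [tA [HtA EtA]] : exists tA : V -> term, (forall x, fin_total ar (tA x)) /\ subst tA A = T.
  apply: (F6gen HwA HbA HlA EA) => //.
  - by move=> p f Hp; rewrite TK ?(WA _ _ Hp) //; left; exists f.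
  - apply: (Tvar A sA) => //; [by exists fa| by move=> p f Hp; left; exists f].
have [tB [HtB EtB]] : exists tB : V -> term, (forall x, fin_total ar (tB x)) /\ subst tB B = T.
  apply: (F6gen HwB HbB HlB EB) => //.
  - by move=> p f Hp; rewrite TK ?(WB _ _ Hp) //; right; exists f.
  - apply: (Tvar B sB) => //; [by exists fb| by move=> p f Hp; right; exists f].
by exists tA, tB; split => //; split => //; rewrite EtA EtB.
Qed.


Lemma L1 (sigma : V -> term) (t : term) a acc r :
  subst_aux sigma t (a ++ acc) r = subst_aux sigma (subterm t a) acc r.
Proof.
elim: r acc => [|i r IH] acc /=; first by [].
by rewrite rcons_cat IH.
Qed.

Lemma subst_subterm (sigma : V -> term) (l : term) p : wf ar l -> l p <> None ->
  subterm (subst sigma l) p = subst sigma (subterm l p).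
Proof.
move=> Hw Hp; apply: functional_extensionality => q.
by rewrite /subterm subst_at // /subst -L1 cats0.
Qed.

Lemma catI (p q r : seq nat) : p ++ q = p ++ r -> q = r.
Proof. by move=> /(congr1 (drop (size p))); rewrite !drop_size_cat. Qed.

Lemma OV (R : trs F V) (t : term) u p' f rho' rho (s' s : V -> term) :
  trs_wf ar R -> orthogonal ar R -> wf ar t ->
  R rho' -> (forall x, wf ar (s' x)) -> subterm t u = subst s' (lhs rho') ->
  R rho -> (forall x, wf ar (s x)) -> subterm t (u ++ p') = subst s (lhs rho) ->
  lhs rho' p' = Some (SFun f) -> p' <> [::] -> False.
Proof.
move=> Hwf [Hll Hno] Ht R1 Hs' E1 R2 Hs E2 Hp Hne.
have [Hf1 [Hf2 [Hr2 _]]] := Hwf _ R1.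
have [Hg1 [Hg2 [Hr2' _]]] := Hwf _ R2.
have Hp' : lhs rho' p' <> None by rewrite Hp.
have Wn : t (u ++ p') <> None.
  have -> : t (u ++ p') = subterm t u p' by [].
  by rewrite E1 (subst_nonvar _ (proj1 Hf1) Hp') ?Hp // => x; rewrite Hp.
have HA0 : exists f0, subterm (lhs rho') p' [::] = Some (SFun f0).
  by exists f; rewrite /subterm cats0.
have EW : subterm t (u ++ p') = subst s' (subterm (lhs rho') p').
  rewrite -(subst_subterm s' (proj1 Hf1) Hp') -E1 /subterm.
  by apply: functional_extensionality => q; rewrite catA.
have Hlin : forall a b x, subterm (lhs rho') p' a = Some (SVar x) ->
    subterm (lhs rho') p' b = Some (SVar x) -> a = b.
  move=> a b x Ha Hb; apply: (catI (p := p')); exact: (Hll _ R1 _ _ x Ha Hb).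
have [tA [tB [HtA [HtB EAB]]]] := UL (fin_subterm Hf1 Hp') Hg1 Hlin (Hll _ R2)
  HA0 Hr2' Hs' Hs (wf_subterm Ht Wn) EW E2.
have [Hnil _] := Hno _ _ R1 R2 p' f Hp (ex_intro _ tA (ex_intro _ tB (conj HtA (conj HtB EAB)))).
by apply: Hne.
Qed.


Lemma PC (a b c : seq nat) : ~~ prefix a b -> prefix a (b ++ c) ->
  exists d, a = b ++ d /\ d <> [::] /\ prefix d c.
Proof.
elim: b a => [|y b IH] [|z a] //=.
- by move=> _ H; exists (z :: a).
- move=> /negP Hn /andP [/eqP Ezy Hp]; subst z.
  have [d [Ed [Hd Hpd]]] : exists d, a = b ++ d /\ d <> [::] /\ prefix d c.
    by apply: IH => //; apply/negP => H; apply: Hn; rewrite eqxx H.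
  by exists d; rewrite Ed.
Qed.

Definition rule_ok (R : trs F V) := trs_wf ar R /\ orthogonal ar R.

Lemma redex_pat (R : trs F V) (t : term) u : rule_ok R -> wf ar t ->
  redex_occ ar R t u <-> exists rho, R rho /\ pat t u (lhs rho).
Proof.
move=> [Hwf [Hll _]] Ht; split.
  move=> [rho [sig [Hr [Hs E]]]]; exists rho; split => //.
  exact: PLf (proj1 (proj1 (Hwf _ Hr))) E.
move=> [rho [Hr Hp]].
have [[Hw [_ Hb]] [_ [[f0 Hf0] _]]] := Hwf _ Hr.
have [sig [Hs E]] := PLb Ht Hw Hb (Hll _ Hr) Hf0 Hp.
by exists rho, sig.
Qed.

Lemma STEP (R : trs F V) (t t' : term) pi rho u0 u : rule_ok R -> wf ar t -> wf ar t' ->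
  step ar R t pi rho t' -> redex_occ ar R t u0 -> step_desc rho pi u0 u ->
  redex_occ ar R t' u.
Proof.
move=> HR Ht Ht' [Hr [sig [Hs [E2 Et']]]] Hred Hd.
have [rho' [sig' [Hr' [Hs' E1]]]] := Hred.
have Hpat := PLf (proj1 (proj1 (proj1 HR _ Hr'))) E1.
apply: (proj2 (redex_pat u HR Ht')); exists rho'; split => //.
rewrite Et'; case: Hd => [[Hnp ->]|[w [x [w' [v [Eu0 [Hw [Ew' ->]]]]]]]].
  move=> p f Hp; rewrite /replace.
  case: ifP => Hpp; last exact: Hpat.
  exfalso; have [d [Ed [Hd Hpd]]] := PC Hnp Hpp.
  have Hdf : exists g, lhs rho' d = Some (SFun g).
    move: Hpd => /prefixP [z Ez].
    case: (eqVneq z [::]) => [Ez0|Hz]; first by exists f; rewrite -Hp Ez Ez0 cats0.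
    apply: (prefSF (proj1 (proj1 (proj1 HR _ Hr'))) (q1 := z)); last by apply/eqP.
    by rewrite -Ez Hp.
  have [g Hg] := Hdf.
  by apply: (OV (proj1 HR) (proj2 HR) Ht Hr' Hs' E1 Hr Hs _ Hg Hd); rewrite -Ed.
have [[Hwl _] [[Hwr _] _]] := proj1 HR _ Hr.
have Hrv : rhs rho w' = Some (SVar v).
  by have := congr1 (fun g => g [::]) Ew'; rewrite /subterm !cats0 Hw.
move=> p f Hp; rewrite /replace -!catA prefix_prefix drop_size_cat //.
rewrite (subst_var sig (x ++ p) Hwr Hrv).
have := Hpat _ _ Hp; rewrite Eu0 -!catA.
have -> : t (pi ++ w ++ x ++ p) = subterm t pi (w ++ x ++ p) by [].
by rewrite E2 (subst_var sig (x ++ p) Hwl Hw).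
Qed.


Lemma prefix_rconsE (u p : seq nat) i : prefix u (rcons p i) = (u == rcons p i) || prefix u p.
Proof.
elim: p u => [|y p IH] [|z u] //=.
- by rewrite orbF eqseq_cons; case: u.
- by rewrite IH eqseq_cons andb_orr.
Qed.

Lemma wf_replace_bot (x : term) u : wf ar x -> x u <> None -> wf ar (replace x u (@bot_term F V)).
Proof.
move=> [H0 H] Hu; split.
  rewrite /replace; case: ifP => // _; by case: (drop _ _).
move=> p i; rewrite /replace prefix_rconsE.
case: (eqVneq u (rcons p i)) => [Eu|Hne] /=.
  have Hp : prefix u p = false.
    by apply/negP => /prefixP [z]; rewrite Eu => /(congr1 size); rewrite size_cat size_rcons; lia.
  rewrite Hp -Eu drop_size; split => // _; apply/H; by rewrite -Eu.
case: ifP => Hp.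
  rewrite /bot_term.
  have -> : drop (size u) (rcons p i) = rcons (drop (size u) p) i.
    by move: Hp => /prefixP [z ->]; rewrite rcons_cat !drop_size_cat.
  split; first by case: (drop _ _).
  by move=> [f []]; case: (drop _ _).
exact: H.
Qed.

Lemma repl_nb (t : term) pi r a : replace t pi (@bot_term F V) r = Some a -> a <> SBot ->
  ~~ prefix pi r.
Proof.
rewrite /replace; case: ifP => // _; rewrite /bot_term.
by case: (drop _ _) => // -[<-].
Qed.

Lemma OVpat (R : trs F V) (t t' : term) u p f pi rho rho' : rule_ok R -> wf ar t ->
  R rho' -> pat t u (lhs rho') -> step ar R t pi rho t' ->
  prefix pi (u ++ p) -> ~~ prefix pi u -> lhs rho' p = Some (SFun f) -> False.
Proof.
move=> HR Ht Hr' Hpat [Hr [sig [Hs [E2 _]]]] Hpp Hnp Hp.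
have [[Hw [_ Hb]] [_ [[f0 Hf0] _]]] := proj1 HR _ Hr'.
have [sig' [Hs' E1]] := PLb Ht Hw Hb (proj1 (proj2 HR) _ Hr') Hf0 Hpat.
have [d [Ed [Hd Hpd]]] := PC Hnp Hpp.
have Hdf : exists g, lhs rho' d = Some (SFun g).
  move: Hpd => /prefixP [z Ez].
  case: (eqVneq z [::]) => [Ez0|Hz]; first by exists f; rewrite -Hp Ez Ez0 cats0.
  apply: (prefSF Hw (q1 := z)); last by apply/eqP.
  by rewrite -Ez Hp.
have [g Hg] := Hdf.
by apply: (OV (proj1 HR) (proj2 HR) Ht Hr' Hs' E1 Hr Hs _ Hg Hd); rewrite -Ed.
Qed.

End Basics.

Section Ord.
Variables (O : Type) (lt : O -> O -> Prop).
Hypothesis Hwo : is_wellorder lt.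

Lemma lt_irr x : ~ lt x x. Proof. exact: (proj1 Hwo). Qed.
Lemma lt_tr x y z : lt x y -> lt y z -> lt x z. Proof. exact: (proj1 (proj2 Hwo)). Qed.
Lemma lt_tri x y : lt x y \/ x = y \/ lt y x. Proof. exact: (proj1 (proj2 (proj2 Hwo))). Qed.
Lemma lt_wf : well_founded lt. Proof. exact: (proj2 (proj2 (proj2 Hwo))). Qed.

Lemma ole_lt_tr x y z : ole lt x y -> lt y z -> lt x z.
Proof. by case=> [H|->] // H'; apply: lt_tr H H'. Qed.

Lemma succ_le g b a : lt g a -> is_succ lt g b -> ole lt b a.
Proof.
move=> Hga [Hgb Hn]; case: (lt_tri b a) => [H|[->|H]]; [by left|by right|].
by case: (Hn a).
Qed.

Lemma succ_ge b2 g i : is_succ lt g i -> lt b2 i -> ole lt b2 g.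
Proof.
move=> [Hgi Hn] Hb; case: (lt_tri b2 g) => [H|[->|H]]; [by left|by right|].
by case: (Hn b2).
Qed.

Lemma wf_min (P : O -> Prop) a : P a -> exists m, P m /\ forall o, P o -> ~ lt o m.
Proof.
elim/(well_founded_ind lt_wf): a => a IH Pa.
case: (classic (exists o, P o /\ lt o a)) => [[o [Po Ho]]|Hn]; first exact: IH Ho Po.
by exists a; split => // o Po Ho; apply: Hn; exists o.
Qed.

Lemma succ_exists j a : lt j a -> exists j', is_succ lt j j'.
Proof.
move=> Hj; have [m [Hm Hmin]] := wf_min (P := fun o => lt j o) Hj.
by exists m; split => // o [H1 H2]; apply: (Hmin o H1).
Qed.

Lemma classify i : (exists o, lt o i) -> (exists g, is_succ lt g i) \/ is_limit lt i.
Proof.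
move=> Hex; case: (classic (exists g, is_succ lt g i)) => [H|H]; first by left.
right; split => // o Ho; apply: NNPP => Hn; apply: H; exists o; split => // o' [H1 H2].
by apply: Hn; exists o'.
Qed.

Variables (F V : Type) (ar : F -> nat).
Local Notation term := (pterm F V).

Lemma LIM (c : O -> term) lam (x t1 : term) b1 (Q : seq nat -> Prop) :
  is_liminf ar lt c lam x -> lt b1 lam -> wf ar t1 -> Q [::] ->
  (forall r i, Q (rcons r i) -> Q r) -> (forall r, Q r -> nonbot_pos t1 r) ->
  (forall j, ole lt b1 j -> lt j lam -> forall r, Q r -> c j r = t1 r) ->
  forall r, Q r -> x r = t1 r.
Proof.
move=> [g [Hglb [Hwx [Hub _]]]] Hb1 Ht1 Q0 Qpre Qnb Hc.
pose m := fun r => if excluded_middle_informative (Q r) then t1 r else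
  if excluded_middle_informative (exists r0 i, r = rcons r0 i /\ Q r0 /\ t1 r <> None)
  then Some (@SBot F V) else None.
have mQ : forall r, Q r -> m r = t1 r.
  by move=> r Hr; rewrite /m; destruct (excluded_middle_informative (Q r)).
have mF : forall r, ~ Q r -> (exists r0 i, r = rcons r0 i /\ Q r0 /\ t1 r <> None) -> m r = Some SBot.
  move=> r H1 H2; rewrite /m; destruct (excluded_middle_informative (Q r)) as [k|k]; first by case: H1.
  by destruct excluded_middle_informative as [h|h]; last by case: h.
have mN : forall r, ~ Q r -> ~ (exists r0 i, r = rcons r0 i /\ Q r0 /\ t1 r <> None) -> m r = None.
  move=> r H1 H2; rewrite /m; destruct (excluded_middle_informative (Q r)) as [k|k]; first by case: H1.
  by destruct excluded_middle_informative as [h|h]; first by case: H2.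
have mcase : forall r, (Q r /\ m r = t1 r) \/ (~ Q r /\ (m r = Some SBot \/ m r = None)).
  move=> r; case: (classic (Q r)) => Hr; first by left; split => //; apply: mQ.
  right; split => //; case: (classic (exists r0 i, r = rcons r0 i /\ Q r0 /\ t1 r <> None)) => H.
    by left; apply: mF. by right; apply: mN.
have wfm : wf ar m.
  split; first by rewrite mQ //; case: Ht1.
  move=> p i; split.
  - case: (classic (Q (rcons p i))) => Hq.
      rewrite mQ // => /(Ht1.2 p i) [f [Hf Hi]]; exists f; split => //.
      by rewrite mQ //; apply: Qpre Hq.
    case: (classic (exists r0 j, rcons p i = rcons r0 j /\ Q r0 /\ t1 (rcons p i) <> None)) => H.
      move: H => [r0 [j [/rcons_inj [E1 E2] [Qr0 Hn]]]]; subst r0 j.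
      move=> _; have [f [Hf Hi]] := (Ht1.2 p i).1 Hn; exists f; split => //.
      by rewrite mQ.
    by rewrite mN.
  - move=> [f [Hf Hi]].
    have Qp : Q p by case: (mcase p) => [[]|[_ [E|E]]] //; rewrite Hf in E.
    have Hn : t1 (rcons p i) <> None by apply/(Ht1.2 p i); exists f; rewrite -mQ.
    case: (classic (Q (rcons p i))) => Hq; first by rewrite mQ.
    by rewrite mF //; exists p, i.
have Hlow : ple m (g b1).
  apply: (proj2 (proj2 (Hglb b1 Hb1))) => // a [j [Hj1 [Hj2 ->]]] p a0 Hp Hnb.
  case: (mcase p) => [[Qp E]|[_ [E|E]]]; rewrite E in Hp => //.
    by rewrite Hc.
  by case: Hp => Ea; rewrite Ea in Hnb.
have Hup : ple (g b1) x by apply: Hub; exists b1.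
move=> r Qr; have [a [Ha Hna]] := Qnb r Qr.
by rewrite Ha; apply: Hup => //; apply: Hlow => //; rewrite mQ.
Qed.

Lemma REV (c : O -> term) lam (x : term) u :
  is_liminf ar lt c lam x -> nonbot_pos x u ->
  exists b', lt b' lam /\ forall j, ole lt b' j -> lt j lam -> nonbot_pos (c j) u.
Proof.
move=> [g [Hglb [Hwx [Hub Hleast]]]] [a [Hxu Ha]].
apply: NNPP => Hn.
have Hx'wf : wf ar (replace x u (@bot_term F V)) by apply: wf_replace_bot => //; rewrite Hxu.
have Hub' : forall a, (exists b, lt b lam /\ a = g b) -> ple a (replace x u (@bot_term F V)).
  move=> _ [b [Hb ->]] p a0 Hp Hnb.
  rewrite /replace; case: ifP => Hpre; last by apply: (Hub (g b)) => //; exists b.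
  exfalso; apply: Hn; exists b; split => // j Hj1 Hj2.
  have Hgu : nonbot_pos (g b) u.
    move: Hpre => /prefixP [z Ez].
    case: (eqVneq z [::]) => [Ez0|Hz]; first by exists a0; rewrite Ez Ez0 cats0 in Hp.
    have [Hwg _] := Hglb b Hb.
    have [f Hf] := prefSF Hwg (q0 := u) (q1 := z) ltac:(by rewrite -Ez Hp) ltac:(by apply/eqP).
    by exists (SFun f).
  have [a1 [Ha1 Hna1]] := Hgu.
  exists a1; split => //.
  by apply: (proj1 (proj2 (Hglb b Hb)) (c j)) => //; exists j.
have := Hleast _ Hx'wf Hub' u a Hxu Ha.
by rewrite /replace prefix_refl drop_size /= => -[Ea]; rewrite Ea in Ha.
Qed.

End Ord.

Theorem proposition5p10 (F V : Type) (ar : F -> nat) (R : trs F V)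
    (O : Type) (lt : O -> O -> Prop) (alpha : O)
    (ts : O -> pterm F V) (pi : O -> seq nat) (rho : O -> rule F V)
    (s t : pterm F V) (U : seq nat -> Prop) :
  trs_wf ar R -> orthogonal ar R ->
  is_wellorder lt ->
  strongly_p_converges ar lt R alpha ts pi rho s t ->
  (forall u, U u -> redex_occ ar R s u) ->
  forall u, desc lt alpha ts pi rho U alpha u -> redex_occ ar R t u.
Proof.
move=> Hwf Horth Hwo [[Hwft Hstep] [Hz [Hlim Halpha]]] HU u Hd.
have HR : rule_ok ar R by split.
rewrite -Halpha; elim: Hd => {u}.
- by move=> b u Hb Hu; rewrite (Hz b Hb); apply: HU.
- move=> g b u0 u Hg Hs _ IH Hsd.
  apply: (STEP HR (Hwft g (or_introl Hg)) (Hwft b (succ_le Hwo Hg Hs)) (Hstep g b Hg Hs) IH Hsd).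
- move=> b u b0 Hb Hl Hnb Hb0 _ IH.
  have Hli := Hlim b Hb Hl.
  have [b' [Hb' Hcb']] := REV Hli Hnb.
  have Hnp : forall j, ole lt b' j -> lt j b -> ~~ prefix (pi j) u.
    by move=> j H1 H2; have [a [Ha Hna]] := Hcb' j H1 H2; apply: repl_nb Ha Hna.
  have [b2 [H02 [H'2 H2b]]] : exists b2, ole lt b0 b2 /\ ole lt b' b2 /\ lt b2 b.
    case: (lt_tri Hwo b0 b') => [H|[->|H]].
    + by exists b'; split; [left|split; [right|]].
    + by exists b'; split; [right|split; [right|]].
    + by exists b0; split; [right|split; [left|]].
  have Hba' : forall j, lt j b -> lt j alpha.
    by move=> j Hj; case: Hb => [H|<-] //; apply: (lt_tr Hwo Hj H).
  have [rh [Hrh Hpat]] := (proj1 (redex_pat u HR (Hwft b2 (or_introl (Hba' b2 H2b))))) (IH b2 H02 H2b).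
  pose Q := fun r => prefix r u \/ exists p f, r = u ++ p /\ lhs rh p = Some (SFun f).
  have Q0 : Q [::] by left; apply: prefix0s.
  have [[Hwl [_ Hbl]] [_ [[f0 Hf0] _]]] := Hwf _ Hrh.
  have Qpre : forall r i, Q (rcons r i) -> Q r.
    move=> r i [H|[p [f [E Hp]]]].
      by left; apply: prefix_trans H; apply: prefix_rcons.
    case: (lastP p) E Hp => [|p0 j] E Hp.
      by left; move: E; rewrite cats0 => <-; apply: prefix_rcons.
    move: E; rewrite -rcons_cat => /rcons_inj [E1 _]; subst r.
    have Hpn : lhs rh (p0 ++ [:: j]) <> None by rewrite cats1 Hp.
    have [g Hg] := prefSF Hwl Hpn ltac:(done).
    by right; exists p0, g.
  have Qnb : forall r, Q r -> nonbot_pos (ts b2) r.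
    move=> r [H|[p [f [-> Hp]]]]; last by exists (SFun f); rewrite (Hpat _ _ Hp).
    have Hu : ts b2 u = Some (SFun f0) by rewrite -[u]cats0; apply: Hpat.
    move: H => /prefixP [z Ez].
    case: (eqVneq z [::]) => [Ez0|Hz0]; first by exists (SFun f0); rewrite -Hu Ez Ez0 cats0.
    have Hwb2 := Hwft b2 (or_introl (Hba' b2 H2b)).
    have [g Hg] := prefSF Hwb2 (q0 := r) (q1 := z) ltac:(by rewrite -Ez Hu) ltac:(by apply/eqP).
    by exists (SFun g).
  have NP : forall j, ole lt b2 j -> lt j b -> (forall r, Q r -> ts j r = ts b2 r) ->
      forall r, Q r -> ~~ prefix (pi j) r.
    move=> j Hj1 Hj2 Hts r Qr.
    have Hja := Hba' j Hj2.
    have [j' Hj'] := succ_exists Hwo Hja.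
    have Hst := Hstep j j' Hja Hj'.
    have Hnpj : ~~ prefix (pi j) u.
      apply: Hnp Hj2; case: H'2 => [H|->]; last exact: Hj1.
      by left; case: Hj1 => [H'|<-] //; exact: (lt_tr Hwo H H').
    case: Qr => [H|[p [f [-> Hp]]]].
      by apply/negP => H'; move: Hnpj; rewrite (prefix_trans H' H).
    apply/negP => Hpp.
    have Hpj : pat (ts j) u (lhs rh).
      by move=> q g Hq; rewrite Hts ?(Hpat _ _ Hq) //; right; exists q, g.
    exact: (OVpat HR (Hwft j (or_introl Hja)) Hrh Hpj Hst Hpp Hnpj Hp).
  have P : forall i, ole lt b2 i -> lt i b -> forall r, Q r -> ts i r = ts b2 r.
    move=> i; elim/(well_founded_ind (lt_wf Hwo)): i => i IHi Hi1 Hi2.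
    case: Hi1 => [H|<-] //.
    case: (classify (ex_intro _ b2 H)) => [[g Hg]|Hil].
      have Hg2 := succ_ge Hwo Hg H.
      have Hgb : lt g b := lt_tr Hwo (proj1 Hg) Hi2.
      have Hgi := proj1 Hg.
      have IHg := IHi g Hgi Hg2 Hgb.
      have [_ [sg [_ [_ ->]]]] := Hstep g i (Hba' g Hgb) Hg.
      move=> r Qr; rewrite /replace.
      by rewrite (negbTE (NP g Hg2 Hgb IHg r Qr)) IHg.
    have Hia : ole lt i alpha by left; apply: Hba'.
    apply: (LIM (Hlim i Hia Hil) H (Hwft b2 (or_introl (Hba' b2 H2b))) Q0 Qpre Qnb).
    move=> j Hj1 Hj2 r Qr.
    have Hjb : lt j b := lt_tr Hwo Hj2 Hi2.
    have IHj : forall r, Q r -> ts j r = ts b2 r.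
      exact: (IHi j Hj2 Hj1 Hjb).
    rewrite /ctx /replace (negbTE (NP j Hj1 Hjb IHj r Qr)); exact: IHj.
  have Hfin := LIM Hli H2b (Hwft b2 (or_introl (Hba' b2 H2b))) Q0 Qpre Qnb.
  apply: (proj2 (redex_pat u HR (Hwft b Hb))); exists rh; split => //.
  move=> p f Hp; rewrite Hfin; first exact: Hpat.
    move=> j Hj1 Hj2 r Qr.
    rewrite /ctx /replace (negbTE (NP j Hj1 Hj2 (P j Hj1 Hj2) r Qr)); exact: P.
  by right; exists p, f.
Qed.
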